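(* For $n\in\{3,4\}$ there is no u-p-word for $n$-permutations of the form $u=u_1\Diamond u_3u_4\cdots u_N$ containing exactly one $\Diamond$ (that is, with $u_1,u_3,\ldots,u_N$ all integers).
   Context: An $n$-permutation is a permutation of $\{1,\ldots,n\}$. For a word $w$ of distinct numbers, $\mathrm{red}(w)$ is obtained by replacing the $i$-th smallest letter by $i$. Let $\Diamond$ be a symbol not among the integers. A word $f=f_1\cdots f_n$ over the positive integers together with $\Diamond$, whose integer letters are pairwise distinct, covers an $n$-permutation $\pi$ if one can substitute real numbers for the occurrences of $\Diamond$ (independently) so that the resulting word has $n$ pairwise distinct entries and reduces to $\pi$; equivalently, $f_i<f_j\iff\pi_i<\pi_j$ for all positions $i,j$ holding integers. A u-p-word for $n$-permutations is a word $u_1\cdots u_N$, $N\geq n$, over this alphabet containing at least one $\Diamond$, such that every factor $u_i\cdots u_{i+n-1}$ ($1\leq i\leq N-n+1$) has pairwise distinct integer letters and every $n$-permutation is covered by exactly one of these factors. *)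

(* Defs.v *)
From mathcomp Require Import all_boot all_fingroup.
Set Implicit Arguments. Unset Strict Implicit. Unset Printing Implicit Defensive.

Definition letter := option nat.
Definition Diamond : letter := None.

Definition int_letters (f : seq letter) : seq nat := pmap id f.

Definition covers (n : nat) (f : seq letter) (p : 'S_n) : Prop :=
  size f = n /\
  forall (i j : 'I_n) (a b : nat),
    nth Diamond f i = Some a -> nth Diamond f j = Some b ->
    (a < b) = (p i < p j).

(* The factor u_{i+1} ... u_{i+n} (0-indexed start i). *)
Definition factor (u : seq letter) (n i : nat) : seq letter :=
  take n (drop i u).

Definition is_upword (n : nat) (u : seq letter) : Prop :=
  [/\ n <= size u,
      Diamond \in u,
      (forall k, Some k \in u -> 0 < k),
      (forall i, i + n <= size u -> uniq (int_letters (factor u n i))) &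
      (forall p : 'S_n, exists! i, i + n <= size u /\ covers (factor u n i) p)].

(* Main.v *)
Require Import Defs.
From mathcomp Require Import all_boot all_fingroup.
From mathcomp Require Import zify.
Set Implicit Arguments. Unset Strict Implicit. Unset Printing Implicit Defensive.

Lemma ltset_proper (T : finType) (g : T -> nat) i j : g i < g j ->
  [set k | g k < g i] \proper [set k | g k < g j].
Proof.
move=> lt; apply/properP; split.
  by apply/subsetP => k; rewrite !inE => /ltn_trans; apply.
by exists i; rewrite !inE ?ltnn.
Qed.

Lemma perm_cmp n (p q : 'S_n) : (forall i j, (p i < p j) = (q i < q j)) -> p = q.
Proof.
move=> H; apply/permP => i; apply/val_inj => /=.
have E : forall r : 'S_n, #|[set j | r j < r i]| = #|[set v : 'I_n | v < r i]|.
  move=> r; rewrite -(card_preimset [set v : 'I_n | v < r i] (@perm_inj _ r)).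
  by apply: eq_card => j; rewrite !inE.
have Hs : [set j | p j < p i] = [set j | q j < q i] by apply/setP => j; rewrite !inE H.
have C := E p; rewrite Hs E in C.
case: (ltngtP (p i) (q i)) => // lt.
  by have := proper_card (@ltset_proper _ val (p i) (q i) lt); rewrite C ltnn.
by have := proper_card (@ltset_proper _ val (q i) (p i) lt); rewrite C ltnn.
Qed.

Lemma rank_perm n (w : 'I_n -> nat) : injective w ->
  exists q : 'S_n, forall i j, (w i < w j) = (q i < q j).
Proof.
move=> injw.
have lt : forall i, #|[set j | w j < w i]| < n.
  move=> i; rewrite -[n in _ < n]card_ord -cardsT; apply: proper_card.
  apply/properP; split; first exact: subsetT.
  by exists i; rewrite !inE ?ltnn.
have cmp : forall i j, (w i < w j) = (#|[set k | w k < w i]| < #|[set k | w k < w j]|).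
  move=> i j; case: (ltngtP (w i) (w j)) => h.
  - by rewrite (proper_card (@ltset_proper _ w _ _ h)).
  - by apply/esym/negbTE; rewrite -leqNgt; apply/ltnW/proper_card/(@ltset_proper _ w _ _ h).
  - by rewrite (injw _ _ h) ltnn.
have finj : injective (fun i => Ordinal (lt i)).
  move=> i j /(congr1 val) /= e; apply: injw; case: (ltngtP (w i) (w j)) => // h.
  - by move: h; rewrite cmp e ltnn.
  - by move: h; rewrite cmp e ltnn.
by exists (perm finj) => i j; rewrite !permE /= cmp.
Qed.

Definition coversl (f : seq letter) (s : seq nat) : bool :=
  all (fun i => all (fun j =>
    if nth Diamond f i is Some a then if nth Diamond f j is Some b then (a < b) == (nth 0 s i < nth 0 s j) else true else true) (iota 0 (size s))) (iota 0 (size s)).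

Definition pl n (p : 'S_n) : seq nat := [seq val (p i) | i <- enum 'I_n].

Lemma size_pl n (p : 'S_n) : size (pl p) = n.
Proof. by rewrite size_map size_enum_ord. Qed.

Lemma nth_pl n (p : 'S_n) (i : 'I_n) : nth 0 (pl p) i = p i.
Proof. by rewrite /pl (nth_map i) ?size_enum_ord ?ltn_ord // nth_ord_enum. Qed.

Lemma coversP n f (p : 'S_n) : size f = n -> covers f p <-> coversl f (pl p).
Proof.
move=> sf; split.
  case=> _ H; apply/allP => i; rewrite mem_iota size_pl => /andP[_ ilt].
  apply/allP => j; rewrite mem_iota => /andP[_ jlt].
  have := H (Ordinal ilt) (Ordinal jlt) => /=.
  case: (nth Diamond f i) => [a|] //; case: (nth Diamond f j) => [b|] //.
  move=> /(_ a b erefl erefl) ->.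
  by rewrite (nth_pl p (Ordinal ilt)) (nth_pl p (Ordinal jlt)).
move=> H; split => // i j a b Ha Hb.
move/allP: H => /(_ i); rewrite mem_iota size_pl ltn_ord => /(_ isT) /allP /(_ j).
by rewrite mem_iota ltn_ord Ha Hb !nth_pl => /(_ isT) /eqP.
Qed.

Lemma perm_of_list n s : s \in permutations (iota 0 n) -> exists p : 'S_n, pl p = s.
Proof.
rewrite mem_permutations => ps.
have us : uniq s by rewrite (perm_uniq ps) iota_uniq.
have sz : size s = n by rewrite (perm_size ps) size_iota.
have lt : forall i : 'I_n, nth 0 s i < n.
  move=> i; have : nth 0 s i \in s by apply: mem_nth; rewrite sz.
  by rewrite (perm_mem ps) mem_iota.
have finj : injective (fun i => Ordinal (lt i)).
  move=> i j /(congr1 val) /= /eqP; rewrite nth_uniq ?sz // => /eqP e.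
  exact: val_inj.
exists (perm finj); apply: (@eq_from_nth _ 0); first by rewrite size_pl sz.
move=> i; rewrite size_pl => ilt.
by rewrite (nth_pl _ (Ordinal ilt)) permE.
Qed.

Definition w0 n x (r : seq nat) : seq letter := Some x :: None :: map Some (take (n-2) r).
Definition w1 (r : seq nat) : seq letter := None :: map Some r.
Definition wF (r : seq nat) : seq letter := rcons (map Some r) None.

Definition goodl n (x : nat) (r : seq nat) : bool :=
  let P := permutations (iota 0 n) in
  has (fun s => coversl (w0 n x r) s && coversl (w1 r) s) P ||
  has (fun s => has (fun s' => (s != s') && [&& coversl (wF r) s, coversl (wF r) s', ~~ coversl (w0 n x r) s, ~~ coversl (w1 r) s, ~~ coversl (w0 n x r) s' & ~~ coversl (w1 r) s']) P) P.

Definition check0 n (x : nat) (r : seq nat) : bool :=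
  has (fun s => ~~ coversl (w0 n x r) s) (permutations (iota 0 n)).

Lemma check4 : all (fun x => all (fun a => all (fun b => all (fun c =>
   ([&& x != a, x != b & a != b] ==> check0 4 x [:: a; b; c]) &&
   ([&& x != a, x != b, a != b, a != c & b != c] ==> goodl 4 x [:: a; b; c])) (iota 0 4)) (iota 0 4)) (iota 0 4)) (iota 0 4).
Proof. vm_compute. reflexivity. Qed.

Lemma check3 : all (fun x => all (fun a => all (fun b =>
   ((x != a) ==> check0 3 x [:: a; b]) &&
   ([&& x != a & a != b] ==> goodl 3 x [:: a; b])) (iota 0 3)) (iota 0 3)) (iota 0 3).
Proof. vm_compute. reflexivity. Qed.

Definition onlyone (u : seq letter) :=
  forall k, k != 1 -> k < size u -> exists v, nth Diamond u k = Some v.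

Lemma nth_some_lt (w : seq letter) i a : nth Diamond w i = Some a -> i < size w.
Proof. by case: (ltnP i (size w)) => // h; rewrite nth_default. Qed.

Lemma factor_size n u i : i + n <= size u -> size (factor u n i) = n.
Proof. by move=> h; rewrite /factor size_takel // size_drop; lia. Qed.

Lemma factor_nth n u i j : j < n -> nth Diamond (factor u n i) j = nth Diamond u (i + j).
Proof. by move=> h; rewrite /factor nth_take // nth_drop. Qed.

Lemma cov_win n u k (p : 'S_n) : k + n <= size u ->
  covers (factor u n k) p <-> forall (i j : 'I_n) a b, nth Diamond u (k+i) = Some a ->
     nth Diamond u (k+j) = Some b -> (a<b) = (p i < p j).
Proof.
move=> h; split.
  by case=> _ H i j a b; have := H i j a b; rewrite !factor_nth.
move=> H; split; first exact: factor_size.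
by move=> i j a b; rewrite !factor_nth //; apply: H.
Qed.

Lemma win_uniq n u (p : 'S_n) i j : is_upword n u -> i + n <= size u -> j + n <= size u ->
  covers (factor u n i) p -> covers (factor u n j) p -> i = j.
Proof.
case=> _ _ _ _ H hi hj ci cj; case: (H p) => k [_ Hk].
by rewrite -(Hk i (conj hi ci)) (Hk j (conj hj cj)).
Qed.

Lemma uniq_pmap_nth (s : seq letter) i j a : uniq (pmap id s) ->
  nth Diamond s i = Some a -> nth Diamond s j = Some a -> i = j.
Proof.
elim: s i j => [|x s IH] i j; first by rewrite !nth_nil.
case: x => [v|] /=.
- case/andP => vn us; case: i j => [|i] [|j] //=.
  + move=> [ev] hj; subst v; case/negP: vn; rewrite mem_pmap map_id -hj mem_nth //.
    exact: nth_some_lt hj.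
  + move=> hi [ev]; subst v; case/negP: vn; rewrite mem_pmap map_id -hi mem_nth //.
    exact: nth_some_lt hi.
  + by move=> hi hj; congr S; exact: IH hi hj.
- move=> us; case: i j => [|i] [|j] //=.
  by move=> hi hj; congr S; exact: IH hi hj.
Qed.

Lemma win_rank n u k : is_upword n u -> onlyone u -> 2 <= k -> k + n <= size u ->
  exists q : 'S_n, covers (factor u n k) q.
Proof.
move=> Hup H1 k2 kn; have [_ _ _ Hu _] := Hup.
pose w (i : 'I_n) := odflt 0 (nth Diamond u (k + i)).
have wE : forall i : 'I_n, nth Diamond u (k + i) = Some (w i).
  move=> i; rewrite /w; have := ltn_ord i => hi.
  have [v ->] : exists v, nth Diamond u (k + i) = Some v by apply: H1; lia.
  by [].
have winj : injective w.
  move=> i j e; apply: val_inj => /=.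
  apply: (@uniq_pmap_nth _ _ _ (w i) (Hu k kn)); rewrite (factor_nth _ _ (ltn_ord _)) ?wE ?e //.
have [q Hq] := rank_perm winj.
exists q; apply/cov_win => // i j a b; rewrite !wE => -[<-] [<-]; exact: Hq.
Qed.

Lemma shift n u k (p : 'S_n) : is_upword n u -> onlyone u -> nth Diamond u 1 = Diamond ->
  3 <= k -> k + n <= size u -> covers (factor u n k) p ->
  (forall (i j : 'I_n) a b, i < n.-1 -> j < n.-1 -> nth Diamond u (2+i) = Some a ->
     nth Diamond u (2+j) = Some b -> (a<b) = (p i < p j)) -> False.
Proof.
move=> Hup H1 Hd k3 kn cp Fp.
have k2 : 2 <= k.-1 by lia.
have kn' : k.-1 + n <= size u by lia.
have [q cq] := win_rank Hup H1 k2 kn'.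
have c1 : covers (factor u n 1) q.
  apply/cov_win; first lia.
  have pos : forall (i : 'I_n) a, nth Diamond u (1 + i) = Some a -> 0 < i.
    by move=> i a; case: (posnP i) => // ->; rewrite addn0 Hd.
  move=> i j a b ha hb.
  have i0 := pos _ _ ha; have j0 := pos _ _ hb.
  have li : i.-1 < n by have := ltn_ord i; lia.
  have lj : j.-1 < n by have := ltn_ord j; lia.
  have hi := ltn_ord i; have hj := ltn_ord j.
  have F := Fp (Ordinal li) (Ordinal lj) a b.
  have e1 : 2 + i.-1 = 1 + i by lia.
  have e2 : 2 + j.-1 = 1 + j by lia.
  have i1 : i.-1 < n.-1 by lia.
  have j1 : j.-1 < n.-1 by lia.
  rewrite /= e1 e2 in F.
  rewrite (F i1 j1 ha hb).
  have [al ea] : exists v, nth Diamond u (k + i.-1) = Some v by apply: H1; lia.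
  have [be eb] : exists v, nth Diamond u (k + j.-1) = Some v by apply: H1; lia.
  move/(cov_win _ kn): cp => /(_ (Ordinal li) (Ordinal lj) al be ea eb) /= <-.
  move/(cov_win _ kn'): cq => cq.
  apply: cq; [rewrite -ea | rewrite -eb]; congr nth; lia.
have n1 : 1 + n <= size u by lia.
have := win_uniq Hup n1 kn' c1 cq.
lia.
Qed.

Lemma K0 n u (p : 'S_n) : is_upword n u -> size u = n -> covers (factor u n 0) p.
Proof.
case=> _ _ _ _ H sz; case: (H p) => k [[kn ck] _].
have k0 : k = 0 by lia.
by rewrite k0 in ck.
Qed.

Lemma K1 n u (p : 'S_n) : is_upword n u -> n < size u ->
  covers (factor u n 0) p -> covers (factor u n 1) p -> False.
Proof.
move=> Hup sz c0 c1.
have h0 : 0 + n <= size u by lia.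
have h1 : 1 + n <= size u by lia.
by have := win_uniq Hup h0 h1 c0 c1.
Qed.

Lemma in2 n u (p : 'S_n) : is_upword n u -> onlyone u -> nth Diamond u 1 = Diamond -> n < size u ->
  covers (rcons (take n.-1 (drop 2 u)) Diamond) p ->
  ~ covers (factor u n 0) p -> ~ covers (factor u n 1) p ->
  2 + n <= size u /\ covers (factor u n 2) p.
Proof.
move=> Hup H1 Hd sz [_ HF] n0 n1.
have Fp : forall (i j : 'I_n) a b, i < n.-1 -> j < n.-1 -> nth Diamond u (2+i) = Some a ->
     nth Diamond u (2+j) = Some b -> (a<b) = (p i < p j).
  move=> i j a b hi hj ha hb; apply: HF.
    rewrite nth_rcons size_takel ?size_drop; last lia.
    by rewrite hi nth_take // nth_drop.
  rewrite nth_rcons size_takel ?size_drop; last lia.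
  by rewrite hj nth_take // nth_drop.
have [_ _ _ _ H] := Hup.
case: (H p) => k [[kn ck] _].
case: k kn ck => [|[|[|k]]] kn ck //.
exfalso; apply: (shift Hup H1 Hd _ kn ck Fp); lia.
Qed.

Lemma K2 n u (p p' : 'S_n) : is_upword n u -> onlyone u -> nth Diamond u 1 = Diamond -> n < size u ->
  covers (rcons (take n.-1 (drop 2 u)) Diamond) p ->
  covers (rcons (take n.-1 (drop 2 u)) Diamond) p' ->
  ~ covers (factor u n 0) p -> ~ covers (factor u n 1) p ->
  ~ covers (factor u n 0) p' -> ~ covers (factor u n 1) p' -> p = p'.
Proof.
move=> Hup H1 Hd sz F F' a0 a1 b0 b1.
have [kn c] := in2 Hup H1 Hd sz F a0 a1.
have [_ c'] := in2 Hup H1 Hd sz F' b0 b1.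
move/(cov_win _ kn): c => c; move/(cov_win _ kn): c' => c'.
apply: perm_cmp => i j.
have hi := ltn_ord i; have hj := ltn_ord j.
have [a ea] : exists v, nth Diamond u (2 + i) = Some v by apply: H1; lia.
have [b eb] : exists v, nth Diamond u (2 + j) = Some v by apply: H1; lia.
by rewrite -(c _ _ _ _ ea eb) (c' _ _ _ _ ea eb).
Qed.

Lemma use0 n u x r : is_upword n u -> size u = n -> factor u n 0 = w0 n x r -> check0 n x r -> False.
Proof.
move=> Hup sz f0 /hasP [s sP ns].
have [p ps] := perm_of_list sP.
have := K0 p Hup sz.
have h0 : 0 + n <= size u by lia.
rewrite (coversP _ (factor_size h0)) f0 ps.
by rewrite (negbTE ns).
Qed.

Lemma use1 n u x r : is_upword n u -> onlyone u -> nth Diamond u 1 = Diamond -> n < size u ->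
  factor u n 0 = w0 n x r -> factor u n 1 = w1 r ->
  rcons (take n.-1 (drop 2 u)) Diamond = wF r -> 0 < n -> size r = n.-1 -> goodl n x r -> False.
Proof.
move=> Hup H1 Hd sz f0 f1 fF n0 sr.
have h0 : 0 + n <= size u by lia.
have h1 : 1 + n <= size u by lia.
have sF : size (rcons (take n.-1 (drop 2 u)) Diamond) = n by rewrite fF size_rcons size_map; lia.
have C0 := fun p => coversP p (factor_size h0).
have C1 := fun p => coversP p (factor_size h1).
have CF := fun p => coversP p sF.
case/orP.
  case/hasP => s sP /andP [c0 c1].
  have [p ps] := perm_of_list sP.
  by apply: (K1 (p := p) Hup sz); [apply/C0; rewrite f0 ps | apply/C1; rewrite f1 ps].
case/hasP => s sP /hasP [s' s'P /andP [ne]].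
case/and5P => cF cF' n0' n1' /andP [n0'' n1''].
have [p ps] := perm_of_list sP.
have [p' ps'] := perm_of_list s'P.
have e : p = p'.
  apply: (K2 Hup H1 Hd sz).
  - by apply/CF; rewrite fF ps.
  - by apply/CF; rewrite fF ps'.
  - by move/C0; rewrite f0 ps (negbTE n0').
  - by move/C1; rewrite f1 ps (negbTE n1').
  - by move/C0; rewrite f0 ps' (negbTE n0'').
  - by move/C1; rewrite f1 ps' (negbTE n1'').
by move: ne; rewrite -ps -ps' e eqxx.
Qed.

Lemma coversl_map (f : nat -> nat) w s :
  {in pmap id w &, forall v v', (f v < f v') = (v < v')} ->
  coversl (map (omap f) w) s = coversl w s.
Proof.
move=> H; rewrite /coversl; apply: eq_all => i; apply: eq_all => j.
have E : forall k, nth Diamond (map (omap f) w) k = omap f (nth Diamond w k).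
  move=> k; case: (ltnP k (size w)) => hk; first by rewrite (nth_map Diamond).
  by rewrite !nth_default ?size_map.
rewrite !E; case Ei: (nth Diamond w i) => [a|] //=; case Ej: (nth Diamond w j) => [b|] //=.
rewrite H // mem_pmap map_id; [rewrite -Ei | rewrite -Ej]; apply: mem_nth.
  exact: nth_some_lt Ei.
exact: nth_some_lt Ej.
Qed.

Lemma pmap_Some (l : seq nat) : pmap id (map Some l) = l.
Proof. by elim: l => //= a l ->. Qed.

Lemma goodl_map n x r f : {in x :: r &, forall v w, (f v < f w) = (v < w)} ->
  goodl n (f x) (map f r) = goodl n x r /\ check0 n (f x) (map f r) = check0 n x r.
Proof.
move=> H.
have E0 : w0 n (f x) (map f r) = map (omap f) (w0 n x r).
  by rewrite /w0 /= -map_take -!map_comp.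
have E1 : w1 (map f r) = map (omap f) (w1 r) by rewrite /w1 /= -!map_comp.
have EF : wF (map f r) = map (omap f) (wF r) by rewrite /wF map_rcons -!map_comp.
have H0 : {in pmap id (w0 n x r) &, forall v v', (f v < f v') = (v < v')}.
  apply: sub_in2 H => v; rewrite /w0 /= pmap_Some !inE => /orP [->//|/mem_take ->].
  by rewrite orbT.
have H1 : {in pmap id (w1 r) &, forall v v', (f v < f v') = (v < v')}.
  apply: sub_in2 H => v; rewrite /w1 /= pmap_Some !inE => ->; by rewrite orbT.
have HF : {in pmap id (wF r) &, forall v v', (f v < f v') = (v < v')}.
  apply: sub_in2 H => v; rewrite /wF -cats1 pmap_cat /= cats0 pmap_Some !inE => ->.
  by rewrite orbT.
rewrite /goodl /check0 E0 E1 EF; split.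
  congr (_ || _); apply: eq_has => s /=.
    by rewrite !(coversl_map _ H0) !(coversl_map _ H1).
  apply: eq_has => s' /=.
  by rewrite !(coversl_map _ H0) !(coversl_map _ H1) !(coversl_map _ HF).
by apply: eq_has => s /=; rewrite !(coversl_map _ H0).
Qed.

Lemma cnt_lt (s : seq nat) v w : v < w -> v \in s ->
  count (fun y => y < v) s < count (fun y => y < w) s.
Proof.
move=> vw; elim: s => //= y s IH; rewrite inE => /orP [/eqP ey | /IH h].
  subst y; rewrite ltnn vw add0n add1n ltnS.
  by apply: sub_count => z /= zv; exact: ltn_trans zv vw.
rewrite -addnS; apply: leq_add => //.
by case yv: (y < v) => //; rewrite (ltn_trans yv vw).
Qed.

Lemma rank_pres (s : seq nat) v w : v \in s -> w \in s ->
  (count (fun y => y < v) s < count (fun y => y < w) s) = (v < w).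
Proof.
move=> vs ws; case: (ltnP v w) => h; first exact: cnt_lt.
apply/negbTE; rewrite -leqNgt; apply: sub_count => z /= zw.
exact: leq_trans zw h.
Qed.

Lemma cnt_size (s : seq nat) v : v \in s -> count (fun y => y < v) s < size s.
Proof.
move=> vs; rewrite -[X in _ < X](count_predC (fun y => y < v) s).
rewrite -{1}[count _ s]addn0 ltn_add2l -has_count.
by apply/hasP; exists v => //=; rewrite ltnn.
Qed.

Lemma neq_pres (s : seq nat) v w : v \in s -> w \in s ->
  (count (fun y => y < v) s != count (fun y => y < w) s) = (v != w).
Proof. by move=> vs ws; rewrite !neq_ltn !rank_pres. Qed.

Lemma onlyone_of o0 o1 r : nth Diamond [:: o0, o1 & r] 1 = Diamond ->
  count (pred1 Diamond) [:: o0, o1 & r] = 1 ->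
  [/\ onlyone [:: o0, o1 & r], o1 = None & exists x, o0 = Some x].
Proof.
move=> /= e1; subst o1; move=> hc.
have [x ex] : exists x, o0 = Some x.
  by case: o0 hc => [x|] /=; [exists x | rewrite ?eqxx /=; lia].
subst o0; move: hc; rewrite /= add0n add1n => -[hr].
split => //; last by exists x.
case=> [|[|k]] // _ hk; first by exists x.
case E: (nth Diamond r k) => [v|] /=; first by exists v.
have : 0 < count (pred1 Diamond) r.
  rewrite -has_count; apply/hasP; exists None => //.
  by rewrite -E mem_nth.
by rewrite hr.
Qed.

Lemma small (s : seq nat) :
  [/\ {in s &, forall v w, (count (fun y => y < v) s < count (fun y => y < w) s) = (v < w)},
      {in s &, forall v w, (count (fun y => y < v) s != count (fun y => y < w) s) = (v != w)} &
      forall v, v \in s -> count (fun y => y < v) s \in iota 0 (size s)].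
Proof.
split.
- by move=> v w vs ws; apply: rank_pres.
- by move=> v w vs ws; apply: neq_pres.
- by move=> v vs; rewrite mem_iota add0n cnt_size.
Qed.

Theorem proposition2 (n : nat) : (n = 3 \/ n = 4) ->
  ~ (exists u : seq letter,
       [/\ is_upword n u, nth Diamond u 1 = Diamond &
           count (pred1 Diamond) u = 1]).
Proof.
move=> hn [u [Hup Hd Hc]].
have n3 : 3 <= n by case: hn => ->.
have szn : n <= size u by case: Hup.
have Hu : forall i, i + n <= size u -> uniq (int_letters (factor u n i)) by case: Hup.
case: u Hup Hd Hc szn Hu => [|o0 [|o1 r0]] Hup Hd Hc szn Hu; try (simpl in szn; lia).
have [H1 e1 [x ex]] := onlyone_of Hd Hc; subst o1 o0.
case: r0 Hup Hd Hc szn Hu H1 => [|o2 r1] Hup Hd Hc szn Hu H1; first by (simpl in szn; lia).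
have sz2 : 2 < size [:: Some x, None, o2 & r1] by simpl in szn |- *; lia.
have [a /= ea] := H1 2 isT sz2; subst o2.
have u0 := Hu 0.
case: hn => ?; subst n.
-
  have xa : x != a by move: (u0 szn); rewrite /= take0 /= inE => /andP [].
  case: r1 Hup Hd Hc szn Hu H1 sz2 u0 => [|o3 r2] Hup Hd Hc szn Hu H1 sz2 u0.
  + apply: (use0 (x := x) (r := [:: a; 0]) Hup) => //.
    pose s := [:: x; a; 0]; have [P1 P2 P3] := small s.
    have [_ <-] := goodl_map 3 (f := fun v => count (fun y => y < v) s) P1.
    have := check3.
    have mx : x \in s by rewrite !inE eqxx.
    have ma : a \in s by rewrite !inE eqxx ?orbT.
    have m0 : 0 \in s by rewrite !inE eqxx ?orbT.
    move/allP/(_ _ (P3 x mx))/allP/(_ _ (P3 a ma))/allP/(_ _ (P3 0 m0)) => /andP [C0 _].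
    rewrite P2 // in C0.
    exact: (implyP C0 xa).
  + have sz3 : 3 < size [:: Some x, None, Some a, o3 & r2] by [].
    have [b /= eb] := H1 3 isT sz3; subst o3.
    have ab : a != b by move: (Hu 1 sz3); rewrite /= take0 /= inE => /andP [].
    apply: (use1 (x := x) (r := [:: a; b]) Hup H1 Hd) => //; try by rewrite /factor /= ?take0.
    pose s := [:: x; a; b]; have [P1 P2 P3] := small s.
    have [<- _] := goodl_map 3 (f := fun v => count (fun y => y < v) s) P1.
    have := check3.
    have mx : x \in s by rewrite !inE eqxx.
    have ma : a \in s by rewrite !inE eqxx ?orbT.
    have mb : b \in s by rewrite !inE eqxx ?orbT.
    move/allP/(_ _ (P3 x mx))/allP/(_ _ (P3 a ma))/allP/(_ _ (P3 b mb)) => /andP [_ C].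
    rewrite !P2 // in C.
    by apply: (implyP C); rewrite xa ab.
-
  case: r1 Hup Hd Hc szn Hu H1 sz2 u0 => [|o3 r2] Hup Hd Hc szn Hu H1 sz2 u0; first by [].
  have sz3 : 3 < size [:: Some x, None, Some a, o3 & r2] by [].
  have [b /= eb] := H1 3 isT sz3; subst o3.
  have [xa xb ab] : [/\ x != a, x != b & a != b].
    by move: (u0 szn); rewrite /= take0 /= !inE !negb_or => /and3P [/andP [-> ->] -> _].
  case: r2 Hup Hd Hc szn Hu H1 sz2 u0 sz3 => [|o4 r3] Hup Hd Hc szn Hu H1 sz2 u0 sz3.
  + apply: (use0 (x := x) (r := [:: a; b; 0]) Hup) => //.
    pose s := [:: x; a; b; 0]; have [P1 P2 P3] := small s.
    have [_ <-] := goodl_map 4 (f := fun v => count (fun y => y < v) s) P1.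
    have := check4.
    have mx : x \in s by rewrite !inE eqxx.
    have ma : a \in s by rewrite !inE eqxx ?orbT.
    have mb : b \in s by rewrite !inE eqxx ?orbT.
    have m0 : 0 \in s by rewrite !inE eqxx ?orbT.
    move/allP/(_ _ (P3 x mx))/allP/(_ _ (P3 a ma))/allP/(_ _ (P3 b mb))/allP/(_ _ (P3 0 m0)) => /andP [C _].
    rewrite !P2 // in C.
    by apply: (implyP C); rewrite xa xb ab.
  + have sz4 : 4 < size [:: Some x, None, Some a, Some b, o4 & r3] by [].
    have [c /= ec] := H1 4 isT sz4; subst o4.
    have [ac bc] : a != c /\ b != c.
      by move: (Hu 1 sz4); rewrite /= take0 /= !inE !negb_or => /and3P [/andP [_ ->] -> _].
    apply: (use1 (x := x) (r := [:: a; b; c]) Hup H1 Hd) => //; try by rewrite /factor /= ?take0.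
    pose s := [:: x; a; b; c]; have [P1 P2 P3] := small s.
    have [<- _] := goodl_map 4 (f := fun v => count (fun y => y < v) s) P1.
    have := check4.
    have mx : x \in s by rewrite !inE eqxx.
    have ma : a \in s by rewrite !inE eqxx ?orbT.
    have mb : b \in s by rewrite !inE eqxx ?orbT.
    have mc : c \in s by rewrite !inE eqxx ?orbT.
    move/allP/(_ _ (P3 x mx))/allP/(_ _ (P3 a ma))/allP/(_ _ (P3 b mb))/allP/(_ _ (P3 c mc)) => /andP [_ C].
    rewrite !P2 // in C.
    by apply: (implyP C); rewrite xa xb ab ac bc.
Qed.
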